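(* Let $c,d>0$ with $cd\le1$ and $g(x)=xF(c,d;c+d;x)$ for $x\in(0,1)$. Then for all $s,p,q>0$, $$g\!\left(\frac{s^p}{1+s^p}\right)+g\!\left(\frac{s^q}{1+s^q}\right)\ge g\!\left(\frac{s^{p+q}}{1+s^{p+q}}\right).$$
   Context: $F(a,b;c;x)$ is the Gaussian hypergeometric function $\sum_{n\ge0}\frac{(a)_n(b)_n}{(c)_n}\frac{x^n}{n!}$ ($|x|<1$), with $(a)_n=a(a+1)\cdots(a+n-1)$, $(a)_0=1$. *)

(* Defs.v *)
From Stdlib Require Import Reals.
Open Scope R_scope.

Fixpoint poch (a : R) (n : nat) : R :=
  match n with
  | O => 1
  | S k => poch a k * (a + INR k)
  end.

Definition hyp_term (a b c x : R) (n : nat) : R :=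
  poch a n * poch b n / poch c n * x ^ n / INR (Factorial.fact n).

Definition is_hyp2F1 (a b c x v : R) : Prop :=
  infinite_sum (hyp_term a b c x) v.

Definition is_g (c d x y : R) : Prop :=
  exists v, is_hyp2F1 c d (c + d) x v /\ y = x * v.

(* Main.v *)
Require Import Defs.
From Stdlib Require Import Reals Lra Psatz.
From Coquelicot Require Import Coquelicot.
Open Scope R_scope.

Lemma ser_le (a b : nat -> R) la lb :
  (forall n, a n <= b n) -> is_series a la -> is_series b lb -> la <= lb.
Proof.
  intros H Ha Hb.
  assert (Rbar_le la lb); [|exact H0].
  apply (is_lim_seq_le (sum_n a) (sum_n b)); [| exact Ha | exact Hb].
  intros n. rewrite !sum_n_Reals. apply sum_Rle. intros; apply H.
Qed.

Definition Ac (c d : R) (n : nat) : R :=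
  poch c n * poch d n / poch (c + d) n / INR (Factorial.fact n).

Lemma poch_pos a n : 0 < a -> 0 < poch a n.
Proof.
  intros Ha; induction n; simpl. lra.
  apply Rmult_lt_0_compat; auto. pose proof (pos_INR n); lra.
Qed.

Lemma Ac_0 c d : Ac c d 0 = 1.
Proof. unfold Ac; simpl; field. Qed.

Lemma Ac_S c d n : 0 < c -> 0 < d ->
  Ac c d (S n) = Ac c d n * ((c + INR n) * (d + INR n) / ((c + d + INR n) * (INR n + 1))).
Proof.
  intros Hc Hd. unfold Ac.
  change (Factorial.fact (S n)) with (S n * Factorial.fact n)%nat.
  rewrite mult_INR, S_INR. simpl poch.
  pose proof (poch_pos (c+d) n ltac:(lra)). pose proof (INR_fact_neq_0 n).
  pose proof (pos_INR n).
  field. repeat split; lra.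
Qed.

Lemma cd_le c d : 0 < c -> 0 < d -> c * d <= 1 -> c * d <= c + d.
Proof. intros. destruct (Rle_dec c 1); nra. Qed.

Lemma Ac_bounds c d n : 0 < c -> 0 < d -> c * d <= 1 -> 0 < Ac c d n <= 1.
Proof.
  intros Hc Hd Hcd. induction n. rewrite Ac_0; lra.
  rewrite Ac_S by auto. pose proof (pos_INR n).
  pose proof (cd_le c d Hc Hd Hcd).
  assert (0 < (c + INR n) * (d + INR n) / ((c + d + INR n) * (INR n + 1)) <= 1).
  { split. apply Rdiv_lt_0_compat; nra.
    apply Rmult_le_reg_r with ((c + d + INR n) * (INR n + 1)). nra.
    unfold Rdiv; rewrite Rmult_assoc, Rinv_l by nra. nra. }
  nra.
Qed.

Lemma C_neg c d n : 0 < c -> 0 < d -> c * d <= 1 ->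
  INR (S (S n)) * Ac c d (S n) - INR (S n) * Ac c d n <= 0.
Proof.
  intros Hc Hd Hcd. rewrite Ac_S by auto. rewrite !S_INR.
  pose proof (pos_INR n). pose proof (Ac_bounds c d n Hc Hd Hcd).
  set (a := Ac c d n) in *. set (k := INR n) in *.
  assert (c + d >= 2 * c * d).
  { assert (0 < c*d) by (apply Rmult_lt_0_compat; lra). assert (c*d*(c*d) <= c*d*1) by (apply Rmult_le_compat_l; lra).
    destruct (Rge_dec (c+d) (2*c*d)) as [|Hn]; auto. exfalso.
    assert ((c+d)*(c+d) < (2*c*d)*(2*c*d)) by (apply Rmult_le_0_lt_compat; lra).
    assert (0 <= (c-d)*(c-d)) by apply Rle_0_sqr. nra. }
  assert ((k + 1 + 1) * ((c + k) * (d + k) / ((c + d + k) * (k + 1))) <= k + 1).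
  { apply Rmult_le_reg_r with ((c + d + k) * (k + 1)). nra.
    replace ((k + 1 + 1) * ((c + k) * (d + k) / ((c + d + k) * (k + 1))) *
      ((c + d + k) * (k + 1))) with ((k+1+1)*((c + k) * (d + k))) by (field; split; lra).
    nra. }
  set (r := (c + k) * (d + k) / ((c + d + k) * (k + 1))) in *.
  assert (0 <= a * ((k+1) - (k+1+1)*r)) by (apply Rmult_le_pos; lra).
  lra.
Qed.

Lemma ser_nonneg (a : nat -> R) la :
  (forall n, 0 <= a n) -> is_series a la -> 0 <= la.
Proof.
  intros H Ha.
  assert (Rbar_le 0 la); [|exact H0].
  apply (is_lim_seq_le (fun _ => 0) (sum_n a)); [| apply is_lim_seq_const | exact Ha].
  intros n. rewrite sum_n_Reals. apply cond_pos_sum. intros; apply H.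
Qed.

Definition Gc (c d : R) : nat -> R := @PS_incr_1 R_AbsRing R_NormedModule (Ac c d).
Definition Dc (c d : R) : nat -> R := PS_derive (Gc c d).
Definition Mc (c d : R) : nat -> R :=
  @PS_minus R_AbsRing R_NormedModule (Dc c d) (@PS_incr_1 R_AbsRing R_NormedModule (Dc c d)).
Definition gf (c d x : R) : R := PSeries (Gc c d) x.
Definition Mf (c d x : R) : R := (1 - x) * PSeries (Dc c d) x.

Section S.
Variables (c d : R) (Hc : 0 < c) (Hd : 0 < d) (Hcd : c * d <= 1).

Lemma rad_A : Rbar_le 1 (CV_radius (Ac c d)).
Proof.
  destruct (CV_radius_bounded (Ac c d)) as [Hub _]. apply Hub.
  exists 1. intros n. rewrite pow1, Rmult_1_r.
  destruct (Ac_bounds c d n Hc Hd Hcd). rewrite Rabs_pos_eq; lra.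
Qed.

Lemma rad_G x : Rabs x < 1 -> Rbar_lt (Rabs x) (CV_radius (Gc c d)).
Proof.
  intros H. unfold Gc. rewrite CV_radius_incr_1.
  apply Rbar_lt_le_trans with (Finite 1). exact H. exact rad_A.
Qed.

Lemma rad_D x : Rabs x < 1 -> Rbar_lt (Rabs x) (CV_radius (Dc c d)).
Proof.
  intros H. unfold Dc. rewrite CV_radius_derive. now apply rad_G.
Qed.

Lemma Dc_eq n : Dc c d n = INR (S n) * Ac c d n.
Proof. reflexivity. Qed.

Lemma Mc_0 : Mc c d 0 = 1.
Proof. unfold Mc, PS_minus. simpl. unfold plus, opp, zero; simpl. rewrite Dc_eq, Ac_0. simpl. lra. Qed.

Lemma Mc_S n : Mc c d (S n) <= 0.
Proof.
  unfold Mc, PS_minus. change (Dc c d (S n) + - Dc c d n <= 0).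
  rewrite !Dc_eq.
  pose proof (C_neg c d n Hc Hd Hcd). lra.
Qed.

Lemma g_series x : Rabs x < 1 -> is_series (fun n => Gc c d n * x ^ n) (gf c d x).
Proof.
  intros H. apply is_pseries_R. apply PSeries_correct. apply CV_radius_inside. now apply rad_G.
Qed.

Lemma D_series x : Rabs x < 1 -> is_series (fun n => Dc c d n * x ^ n) (PSeries (Dc c d) x).
Proof.
  intros H. apply is_pseries_R. apply PSeries_correct. apply CV_radius_inside. now apply rad_D.
Qed.

Lemma M_series x : Rabs x < 1 -> is_series (fun n => Mc c d n * x ^ n) (Mf c d x).
Proof.
  intros H. apply is_pseries_R.
  assert (H1 : is_pseries (Dc c d) x (PSeries (Dc c d) x)).
  { apply PSeries_correct. apply CV_radius_inside. now apply rad_D. }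
  pose proof (is_pseries_minus _ _ _ _ _ H1 (is_pseries_incr_1 _ _ _ H1)) as H2.
  unfold Mc, Mf. replace ((1 - x) * PSeries (Dc c d) x) with
    (plus (PSeries (Dc c d) x) (opp (scal x (PSeries (Dc c d) x)))).
  exact H2. simpl. unfold plus, opp, scal; simpl. unfold mult; simpl. change (PSeries (Dc c d) x + - (x * PSeries (Dc c d) x) = (1 - x) * PSeries (Dc c d) x). ring.
Qed.

Lemma Gc_nonneg n : 0 <= Gc c d n.
Proof. unfold Gc. destruct n; simpl. unfold zero; simpl; lra. destruct (Ac_bounds c d n Hc Hd Hcd); lra. Qed.

Lemma g_nonneg x : 0 <= x < 1 -> 0 <= gf c d x.
Proof.
  intros H. apply (ser_nonneg (fun n => Gc c d n * x ^ n)).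
  intros n. apply Rmult_le_pos. apply Gc_nonneg. apply pow_le; lra.
  apply g_series. rewrite Rabs_pos_eq; lra.
Qed.

Lemma g_mono x y : 0 <= x -> x <= y -> y < 1 -> gf c d x <= gf c d y.
Proof.
  intros H1 H2 H3. apply (ser_le (fun n => Gc c d n * x ^ n) (fun n => Gc c d n * y ^ n)).
  - intros n. apply Rmult_le_compat_l. apply Gc_nonneg. apply pow_incr. lra.
  - apply g_series. rewrite Rabs_pos_eq; lra.
  - apply g_series. rewrite Rabs_pos_eq; lra.
Qed.

Lemma g_0 : gf c d 0 = 0.
Proof. unfold gf, Gc. rewrite PSeries_incr_1. ring. Qed.

Lemma M_nonneg x : 0 <= x < 1 -> 0 <= Mf c d x.
Proof.
  intros H. unfold Mf. apply Rmult_le_pos. lra.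
  apply (ser_nonneg (fun n => Dc c d n * x ^ n)).
  - intros n. rewrite Dc_eq. destruct (Ac_bounds c d n Hc Hd Hcd).
    pose proof (pos_INR (S n)). apply Rmult_le_pos. apply Rmult_le_pos; lra. apply pow_le; lra.
  - apply D_series. rewrite Rabs_pos_eq; lra.
Qed.

Lemma M_anti x y : 0 <= x -> x <= y -> y < 1 -> Mf c d y <= Mf c d x.
Proof.
  intros H1 H2 H3. apply (ser_le (fun n => Mc c d n * y ^ n) (fun n => Mc c d n * x ^ n)).
  - intros [|n]. simpl. lra.
    pose proof (Mc_S n). pose proof (pow_incr x y (S n) ltac:(lra)).
    assert (0 <= (- Mc c d (S n)) * (y ^ S n - x ^ S n)) by
      (apply Rmult_le_pos; lra). lra.
  - apply M_series. rewrite Rabs_pos_eq; lra.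
  - apply M_series. rewrite Rabs_pos_eq; lra.
Qed.

Lemma g_deriv x : Rabs x < 1 -> is_derive (gf c d) x (PSeries (Dc c d) x).
Proof.
  intros H. unfold gf. unfold Dc. apply is_derive_PSeries. now apply rad_G.
Qed.

End S.

Section S3.
Variables (c d : R) (Hc : 0 < c) (Hd : 0 < d) (Hcd : c * d <= 1).

Definition phi (m w : R) := gf c d w + m * ln (1 - w).

Lemma phi_mvt m a b : 0 <= a -> a < b -> b < 1 ->
  exists xi, a < xi < b /\ phi m b - phi m a = (Mf c d xi - m) / (1 - xi) * (b - a).
Proof.
  intros Ha Hab Hb.
  destruct (MVT_cor2 (phi m) (fun w => PSeries (Dc c d) w + m * (-1 / (1 - w))) a b Hab)
    as [xi [Heq Hxi]].
  - intros w Hw. apply is_derive_Reals. unfold phi.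
    apply (is_derive_plus (gf c d) (fun w => m * ln (1 - w))).
    + apply g_deriv; auto. rewrite Rabs_pos_eq; lra.
    + auto_derive. lra. field. lra.
  - exists xi. split. lra. rewrite Heq. f_equal. unfold Mf. field. lra.
Qed.

Lemma phi_le m a b : 0 <= a -> a <= b -> b < 1 ->
  (forall w, a <= w <= b -> Mf c d w <= m) -> phi m b <= phi m a.
Proof.
  intros Ha Hab Hb HM. destruct (Rle_lt_or_eq_dec a b Hab) as [Hlt| ->]; [|lra].
  destruct (phi_mvt m a b Ha Hlt Hb) as [xi [Hxi Heq]].
  assert (HMx := HM xi ltac:(lra)).
  assert (0 <= (m - Mf c d xi) * (/ (1 - xi) * (b - a))).
  { apply Rmult_le_pos. lra. apply Rmult_le_pos. left; apply Rinv_0_lt_compat; lra. lra. }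
  assert ((Mf c d xi - m) / (1 - xi) * (b - a) = - ((m - Mf c d xi) * (/ (1 - xi) * (b - a))))
    by (unfold Rdiv; ring).
  lra.
Qed.

Lemma phi_ge m a b : 0 <= a -> a <= b -> b < 1 ->
  (forall w, a <= w <= b -> m <= Mf c d w) -> phi m a <= phi m b.
Proof.
  intros Ha Hab Hb HM. destruct (Rle_lt_or_eq_dec a b Hab) as [Hlt| ->]; [|lra].
  destruct (phi_mvt m a b Ha Hlt Hb) as [xi [Hxi Heq]].
  assert (HMx := HM xi ltac:(lra)).
  assert (0 <= (Mf c d xi - m) * (/ (1 - xi) * (b - a))).
  { apply Rmult_le_pos. lra. apply Rmult_le_pos. left; apply Rinv_0_lt_compat; lra. lra. }
  assert ((Mf c d xi - m) / (1 - xi) * (b - a) = ((Mf c d xi - m) * (/ (1 - xi) * (b - a))))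
    by (unfold Rdiv; ring).
  lra.
Qed.

Lemma xt_bounds t : 0 < t -> 0 <= 1 - / (1 + t) < 1.
Proof.
  intros Ht. assert (0 < / (1 + t)) by (apply Rinv_0_lt_compat; lra).
  assert (/ (1 + t) <= 1). { rewrite <- Rinv_1. apply Rinv_le_contravar; lra. }
  lra.
Qed.

Lemma xt_mono t u : 0 < t -> t <= u -> 1 - / (1 + t) <= 1 - / (1 + u).
Proof.
  intros Ht Htu. assert (/ (1 + u) <= / (1 + t)) by (apply Rinv_le_contravar; lra). lra.
Qed.

Lemma ln_xt t : 0 < t -> ln (1 - (1 - / (1 + t))) = - ln (1 + t).
Proof. intros. replace (1 - (1 - / (1 + t))) with (/ (1 + t)) by ring. apply ln_Rinv. lra. Qed.

Lemma key t u : 0 < t -> t <= u ->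
  gf c d (1 - / (1 + t * u)) <= gf c d (1 - / (1 + t)) + gf c d (1 - / (1 + u)).
Proof.
  intros Ht Htu. assert (Hu : 0 < u) by lra. assert (Htu0 : 0 < t * u) by nra.
  set (x1 := 1 - / (1 + t)). set (x2 := 1 - / (1 + u)). set (x3 := 1 - / (1 + t * u)).
  pose proof (xt_bounds t Ht) as B1. pose proof (xt_bounds u Hu) as B2.
  pose proof (xt_bounds _ Htu0) as B3. fold x1 x2 x3 in B1, B2, B3.
  assert (H12 : x1 <= x2) by (apply xt_mono; lra).
  pose proof (g_nonneg c d Hc Hd Hcd x1 B1).
  destruct (Rle_dec x3 x2) as [H32|H32].
  - pose proof (g_mono c d Hc Hd Hcd x3 x2 ltac:(lra) H32 ltac:(lra)). lra.
  - set (m1 := Mf c d x1). set (m2 := Mf c d x2).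
    assert (E1 : phi m2 x3 <= phi m2 x2).
    { apply phi_le; try lra. intros w Hw. apply M_anti; auto; lra. }
    assert (E2 : phi m1 0 <= phi m1 x1).
    { apply phi_ge; try lra. intros w Hw. apply M_anti; auto; lra. }
    unfold phi in E1, E2. rewrite g_0 in E2 by auto.
    replace (1 - 0) with 1 in E2 by ring. rewrite ln_1 in E2.
    unfold x1, x2, x3 in E1, E2. rewrite !ln_xt in E1, E2 by auto.
    fold x1 x2 x3 in E1, E2.
    assert (L : ln (1 + t * u) <= ln (1 + t) + ln (1 + u)).
    { rewrite <- ln_mult by lra. apply ln_le; nra. }
    assert (L1 : 0 <= ln (1 + t)). { rewrite <- ln_1. apply ln_le; lra. }
    assert (M2 : 0 <= m2) by (apply M_nonneg; auto).
    assert (M12 : m2 <= m1) by (apply M_anti; auto; lra).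
    assert (m2 * (ln (1 + t * u) - ln (1 + u)) <= m2 * ln (1 + t))
      by (apply Rmult_le_compat_l; lra).
    assert (m2 * ln (1 + t) <= m1 * ln (1 + t)) by (apply Rmult_le_compat_r; lra).
    change (ln (1 - x2)) with (ln (1 - (1 - / (1 + u)))) in E1. rewrite (ln_xt u Hu) in E1. lra.
Qed.

End S3.

Lemma hyp_eq c d x n : hyp_term c d (c + d) x n = Ac c d n * x ^ n.
Proof. unfold hyp_term, Ac, Rdiv. ring. Qed.

Lemma is_g_eq c d x y : is_g c d x y -> y = gf c d x.
Proof.
  intros [v [Hv ->]]. unfold is_hyp2F1 in Hv. apply is_series_Reals in Hv.
  assert (Hs : is_series (fun n => Ac c d n * x ^ n) v).
  { apply (@is_series_ext R_AbsRing R_NormedModule (hyp_term c d (c + d) x)).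
    - intros n. apply hyp_eq.
    - exact Hv. }
  apply is_series_unique in Hs. unfold gf, Gc. rewrite PSeries_incr_1.
  unfold PSeries. rewrite Hs. reflexivity.
Qed.

Theorem mainTheorem10 :
  forall (c d : R), 0 < c -> 0 < d -> c * d <= 1 ->
  forall (s p q : R), 0 < s -> 0 < p -> 0 < q ->
  forall (g1 g2 g3 : R),
    is_g c d (Rpower s p / (1 + Rpower s p)) g1 ->
    is_g c d (Rpower s q / (1 + Rpower s q)) g2 ->
    is_g c d (Rpower s (p + q) / (1 + Rpower s (p + q))) g3 ->
    g1 + g2 >= g3.
Proof.
  intros c d Hc Hd Hcd s p q Hs Hp Hq g1 g2 g3 H1 H2 H3.
  apply is_g_eq in H1, H2, H3. subst.
  rewrite Rpower_plus.
  assert (Pt : 0 < Rpower s p) by (unfold Rpower; apply exp_pos).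
  assert (Pu : 0 < Rpower s q) by (unfold Rpower; apply exp_pos).
  set (t := Rpower s p) in *. set (u := Rpower s q) in *.
  assert (F : forall z, 0 < z -> z / (1 + z) = 1 - / (1 + z)) by (intros; field; lra).
  rewrite !F by nra.
  destruct (Rle_dec t u).
  - pose proof (key c d Hc Hd Hcd t u Pt r). lra.
  - pose proof (key c d Hc Hd Hcd u t Pu ltac:(lra)). rewrite Rmult_comm in H. lra.
Qed.
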